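(* Let $\mathfrak{G}$ be the Goldman Lie algebra of the closed torus over $\mathbb{Z}$. Then the derived subalgebra $[\mathfrak{G},\mathfrak{G}]$ is the $\mathbb{Z}$-submodule of $\mathfrak{G}$ spanned by the elements $\gcd(i,j)\,a^ib^j$ for $i,j\in\mathbb{Z}\setminus\{0\}$, together with $n\,a^n$ and $n\,b^n$ for $n\in\mathbb{Z}\setminus\{0\}$.
   Context: Let $T^2=\Sigma_{1,0}$ be the closed oriented torus and $\hat\pi$ its set of free homotopy classes of loops, identified with $\pi_1(T^2)\cong\mathbb{Z}^2$; with $a,b$ the standard generators every class is written $a^ib^j$, $(i,j)\in\mathbb{Z}^2$. The Goldman bracket ($[\alpha,\beta]=\sum_{p\in\alpha\cap\beta}\epsilon(p)\,\alpha*_p\beta$ over transverse intersection points $p$, with $\epsilon(p)$ the intersection sign and $\alpha*_p\beta$ the concatenation at $p$, extended bilinearly) is given on the torus by $[a^ib^j,a^kb^l]=(il-jk)\,a^{i+k}b^{j+l}$. The Goldman Lie algebra over $\mathbb{Z}$ is the free abelian group $\mathbb{Z}\hat\pi$ with basis $\hat\pi$ and this bracket, and $[\mathfrak{G},\mathfrak{G}]$ is the $\mathbb{Z}$-span of all brackets. *)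

(* Defs.v *)
From HB Require Import structures.
From mathcomp Require Import all_boot all_order all_algebra.
From mathcomp.multinomials Require Import freeg.
Set Implicit Arguments. Unset Strict Implicit. Unset Printing Implicit Defensive.
Import Order.TTheory GRing.Theory Num.Theory.
Local Open Scope ring_scope.

(* Free homotopy classes of loops on the torus: a^i b^j  <->  (i, j). *)
Definition loopT := (int * int)%type.

(* The Goldman Lie algebra of the torus over Z: the free abelian group
   Z[pi-hat] with basis pi-hat = Z^2. *)
Definition goldman := {freeg loopT / int}.

Definition gen (c : int) (i j : int) : goldman := << c *g (i, j) >>.

(* Bracket on basis elements: [a^i b^j, a^k b^l] = (il - jk) a^(i+k) b^(j+l),
   extended bilinearly. *)
Definition gbracket_basis (p q : loopT) : goldman :=
  gen (p.1 * q.2 - p.2 * q.1) (p.1 + q.1) (p.2 + q.2).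

Definition gbracket (x y : goldman) : goldman :=
  \sum_(p <- dom x) \sum_(q <- dom y)
     gbracket_basis p q *~ (coeff p x * coeff q y).

Definition zspan (P : goldman -> Prop) (z : goldman) : Prop :=
  exists s : seq (int * goldman),
    (forall u, u \in s -> P u.2) /\ z = \sum_(u <- s) u.2 *~ u.1.

Definition derived (z : goldman) : Prop :=
  zspan (fun w => exists x y, w = gbracket x y) z.

Definition derived_gens (w : goldman) : Prop :=
  (exists i j : int, i != 0 /\ j != 0 /\ w = gen (gcdz i j) i j)
  \/ (exists n : int, n != 0 /\ w = gen n n 0)
  \/ (exists n : int, n != 0 /\ w = gen n 0 n).

(* Main.v *)
Require Import Defs.
From mathcomp Require Import all_boot all_order all_algebra.
From mathcomp.multinomials Require Import freeg.
From mathcomp Require Import ring.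
Import Order.TTheory GRing.Theory Num.Theory.
Local Open Scope ring_scope.

Lemma zspan0 P : zspan P 0.
Proof. by exists [::]; split => //; rewrite big_nil. Qed.

Lemma zspan1 P w : P w -> zspan P w.
Proof.
move=> Pw; exists [:: (1, w)]; split; first by move=> u; rewrite inE => /eqP ->.
by rewrite big_seq1 mulr1z.
Qed.

Lemma zspanD P x y : zspan P x -> zspan P y -> zspan P (x + y).
Proof.
move=> [s [Hs ->]] [t [Ht ->]]; exists (s ++ t); split; last by rewrite big_cat.
by move=> u; rewrite mem_cat => /orP [/Hs|/Ht].
Qed.

Lemma zspanZ P x k : zspan P x -> zspan P (x *~ k).
Proof.
move=> [s [Hs ->]]; exists [seq (u.1 * k, u.2) | u <- s]; split.
  by move=> u /mapP [v vs ->] /=; apply: Hs.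
rewrite big_map mulrz_suml; apply: eq_bigr => u _ /=; by rewrite mulrzA.
Qed.

Lemma zspan_sum P (I : Type) (r : seq I) (F : I -> goldman) :
  (forall i, zspan P (F i)) -> zspan P (\sum_(i <- r) F i).
Proof.
move=> H; elim: r => [|a r IH]; first by rewrite big_nil; exact: zspan0.
by rewrite big_cons; apply: zspanD.
Qed.

Lemma zspan_idem P Q z : (forall w, P w -> zspan Q w) -> zspan P z -> zspan Q z.
Proof.
move=> H [s [Hs ->]]; elim: s Hs => [|a s IH] Hs.
  by rewrite big_nil; exact: zspan0.
rewrite big_cons; apply: zspanD.
  by apply: zspanZ; apply: H; apply: Hs; rewrite inE eqxx.
by apply: IH => u us; apply: Hs; rewrite inE us orbT.
Qed.

Lemma genZ c d m n : gen (c * d) m n = gen c m n *~ d.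
Proof. by rewrite /gen freeg_mulz mulrzz. Qed.

Lemma gen0 m n : gen 0 m n = 0.
Proof. by rewrite /gen freegU0. Qed.

Lemma genN c m n : gen (- c) m n = gen c m n *~ -1.
Proof. by rewrite -genZ mulrN1. Qed.

Lemma gcd_gens m n : zspan derived_gens (gen (gcdz m n) m n).
Proof.
have [->|m0] := eqVneq m 0; have [->|n0] := eqVneq n 0.
- by rewrite gen0; exact: zspan0.
- rewrite gcd0z abszE.
  have [n_ge0|n_lt0] := lerP 0 n.
    by rewrite ger0_norm //; apply: zspan1; right; right; exists n.
  rewrite ltr0_norm // genN; apply: zspanZ; apply: zspan1; right; right; by exists n.
- rewrite gcdz0 abszE.
  have [m_ge0|m_lt0] := lerP 0 m.
    by rewrite ger0_norm //; apply: zspan1; right; left; exists m.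
  rewrite ltr0_norm // genN; apply: zspanZ; apply: zspan1; right; left; by exists m.
- by apply: zspan1; left; exists m, n.
Qed.

Lemma dvd_gens c m n : (gcdz m n %| c)%Z -> zspan derived_gens (gen c m n).
Proof.
move=> /dvdzP [d ->]; rewrite mulrC genZ; apply: zspanZ; exact: gcd_gens.
Qed.

Lemma bracket_gen1 p q : gbracket (gen 1 p.1 p.2) (gen 1 q.1 q.2) = gbracket_basis p q.
Proof.
rewrite /gbracket /gen -!surjective_pairing !domU1 !big_seq1 !coeffU eqxx mulr1.
by rewrite eqxx !mul1r mulr1z.
Qed.

Lemma derived_gen c m n : (gcdz m n %| c)%Z -> derived (gen c m n).
Proof.
move=> /dvdzP [d ->]; rewrite mulrC genZ; apply: zspanZ; apply: zspan1.
have [u [v huv]] := Bezoutz m n.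
exists (gen 1 v (- u)), (gen 1 (m - v) (n + u)).
rewrite (bracket_gen1 (v, - u) (m - v, n + u)) /gbracket_basis /= -huv.
congr gen; ring.
Qed.

Theorem mainTheorem4 (z : goldman) : derived z <-> zspan derived_gens z.
Proof.
split.
  apply: zspan_idem => w [x [y ->]].
  rewrite /gbracket; apply: zspan_sum => p; apply: zspan_sum => q; apply: zspanZ.
  rewrite /gbracket_basis; apply: dvd_gens.
  rewrite (_ : p.1 * q.2 - p.2 * q.1 = p.1 * (p.2 + q.2) - p.2 * (p.1 + q.1)); last by ring.
  by rewrite rpredB // dvdz_mull // ?dvdz_gcdr ?dvdz_gcdl.
apply: zspan_idem => w [[i [j [_ [_ ->]]]]|[[n [_ ->]]|[n [_ ->]]]]; apply: derived_gen.
- by [].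
- by rewrite gcdz0 dvdzE abszE.
- by rewrite gcd0z dvdzE abszE.
Qed.
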